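(* For every integer $N\ge16$ there is $C<\infty$ such that for every interval $I_0\subset[0,1]$ and every decomposition $I_0=\bigcup_{r\ge1}I_r$ into pairwise disjoint intervals, $$\sum_{r\ge1}\widehat{\dot\sigma}(I_r)\,\mathsf E(I_r,\widehat{\dot\sigma})^2\,\mathrm P(I_r,\mathbf 1_{I_0}\widehat\omega)^2\le C\,\widehat\omega(I_0),$$ terms with $\widehat{\dot\sigma}(I_r)=0$ being interpreted as $0$.
   Context: $\mathrm P(I,\mu)=\int_{\mathbb R}\frac{|I|}{(|I|+\operatorname{dist}(x,I))^2}\,d\mu(x)$; for $\mu(I)>0$, $\mathsf E(I,\mu)^2=\frac12\,\frac{1}{\mu(I)^2}\int_I\int_I\frac{(x-x')^2}{|I|^2}\,d\mu(x)\,d\mu(x')$. Cantor intervals: fix an integer $N\ge16$. Set $I^0_1=[0,1]$. Each interval $I=[a,a+N^{-k}]$ of generation $k$ has two children of generation $k+1$: the left child $I_-=[a,a+N^{-k-1}]$ and the right child $I_+=[a+N^{-k}-N^{-k-1},a+N^{-k}]$. The $2^k$ intervals of generation $k$ are denoted $I^k_j$, $1\le j\le 2^k$, numbered left to right; $\mathcal D$ is the collection of all of them. $\dot z^k_j$ is the center of $I^k_j$. The Cantor set is $\mathsf E^{(N)}=\bigcap_{k}\bigcup_{j}I^k_j$. Redistributed Cantor measure: with $\eta=1/N$, $\widehat\omega$ is the unique Borel probability measure supported on $\mathsf E^{(N)}$ such that $\widehat\omega(I^1_1)=\widehat\omega(I^1_2)=\frac12$ and for every $I\in\mathcal D$ of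 generation $\ge1$: if $I$ is the left child of its parent then $\widehat\omega(I_-)=\frac{1+\eta}2\widehat\omega(I)$, $\widehat\omega(I_+)=\frac{1-\eta}2\widehat\omega(I)$; if $I$ is the right child of its parent then $\widehat\omega(I_-)=\frac{1-\eta}2\widehat\omega(I)$, $\widehat\omega(I_+)=\frac{1+\eta}2\widehat\omega(I)$. Weights: $\widehat s^k_j=N^{-2k}/\widehat\omega(I^k_j)$; $\widehat{\dot\sigma}=\sum_{k\ge0}\sum_{j=1}^{2^k}\widehat s^k_j\,\delta_{\dot z^k_j}$. *)

(* Defs.v *)
From Stdlib Require Import Reals Lra Lia Classical ClassicalEpsilon.
Open Scope R_scope.

Fixpoint sumR (n : nat) (f : nat -> R) : R :=
  match n with
  | O => 0
  | S m => sumR m f + f m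
  end.

Definition decR (P : Prop) (a b : R) : R :=
  if excluded_middle_informative P then a else b.

(* limit of a real sequence (0 if it does not converge; all sequences to
   which this is applied below converge) *)
Definition lim (u : nat -> R) : R :=
  match excluded_middle_informative (exists l, Un_cv u l) with
  | left H => proj1_sig (constructive_indefinite_description _ H)
  | right _ => 0
  end.

Record itv := Itv { lo : R; hi : R; lo_closed : bool; hi_closed : bool }.

Definition inI (I : itv) (x : R) : Prop :=
  (lo I < x \/ (lo_closed I = true /\ lo I = x)) /\
  (x < hi I \/ (hi_closed I = true /\ x = hi I)).

Definition len (I : itv) : R := Rmax 0 (hi I - lo I).

Definition distI (x : R) (I : itv) : R := Rmax 0 (Rmax (lo I - x) (x - hi I)).

(* ---------- Cantor intervals I^k_j, j = 0 .. 2^k - 1 (left to right) ----------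
   The binary digits of j (most significant first) record the choices
   left child (0) / right child (1) at generations 1..k; the parent of
   (k+1, j) is (k, j/2). *)

Definition eta (N : nat) : R := / INR N.

Fixpoint cL (N : nat) (k j : nat) : R :=
  match k with
  | O => 0
  | S k' => cL N k' (Nat.div2 j) +
            (if Nat.odd j then (/ INR N) ^ k' - (/ INR N) ^ (S k') else 0)
  end.

Definition clen (N k : nat) : R := (/ INR N) ^ k.
Definition zc (N k j : nat) : R := cL N k j + clen N k / 2.

Fixpoint wt (N : nat) (k j : nat) : R :=
  match k with
  | O => 1
  | S O => / 2
  | S (S k' as k1) =>
      wt N k1 (Nat.div2 j) *
      (if Bool.eqb (Nat.odd j) (Nat.odd (Nat.div2 j))
       then (1 + eta N) / 2 else (1 - eta N) / 2)
  end.

Definition sw (N k j : nat) : R := (/ INR N) ^ (2 * k) / wt N k j.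

(* ---------- the measure \widehat\omega ----------
   \widehat\omega is the weak limit of the discrete measures
   mu_k = sum_j \widehat\omega(I^k_j) delta_{\dot z^k_j}; for the sets and
   the (piecewise continuous, bounded) integrands used below the integral
   against \widehat\omega is the limit of the integrals against mu_k. *)

Definition omega_int (N : nat) (A : itv) (f : R -> R) : R :=
  lim (fun k => sumR (2 ^ k) (fun j =>
         decR (inI A (zc N k j)) (f (zc N k j) * wt N k j) 0)).

Definition omega (N : nat) (A : itv) : R := omega_int N A (fun _ => 1).

Definition Pker (I : itv) (x : R) : R := len I / (len I + distI x I) ^ 2.
Definition Pomega (N : nat) (I I0 : itv) : R := omega_int N I0 (Pker I).

Definition sigma (N : nat) (I : itv) : R :=
  lim (fun n => sumR n (fun k => sumR (2 ^ k) (fun j =>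
         decR (inI I (zc N k j)) (sw N k j) 0))).

(* int_I int_I (x-x')^2/|I|^2 dsigma(x) dsigma(x')  (nonnegative double series,
   summed over squares of generations) *)
Definition sigma_dbl (N : nat) (I : itv) : R :=
  lim (fun n => sumR n (fun k => sumR n (fun k' =>
         sumR (2 ^ k) (fun j => sumR (2 ^ k') (fun j' =>
           decR (inI I (zc N k j) /\ inI I (zc N k' j'))
             (sw N k j * sw N k' j' * (zc N k j - zc N k' j') ^ 2 / len I ^ 2)
             0))))).

Definition Esq (N : nat) (I : itv) : R :=
  / 2 * / (sigma N I) ^ 2 * sigma_dbl N I.

Definition term (N : nat) (I I0 : itv) : R :=
  decR (sigma N I = 0) 0 (sigma N I * Esq N I * (Pomega N I I0) ^ 2).

(* Main.v *)
Require Import Defs.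
From Stdlib Require Import Reals Lra Lia Classical ClassicalEpsilon.
Open Scope R_scope.

Lemma sumR_ext n f g : (forall i, (i < n)%nat -> f i = g i) -> sumR n f = sumR n g.
Proof. induction n; simpl; intros H; auto. rewrite IHn by (intros; apply H; lia). rewrite H by lia. auto. Qed.

Lemma sumR_le n f g : (forall i, (i < n)%nat -> f i <= g i) -> sumR n f <= sumR n g.
Proof. induction n; simpl; intros H; [lra|]. pose proof (H n ltac:(lia)). pose proof (IHn ltac:(intros; apply H; lia)). lra. Qed.

Lemma sumR_plus n f g : sumR n (fun i => f i + g i) = sumR n f + sumR n g.
Proof. induction n; simpl; [lra|]. rewrite IHn; lra. Qed.

Lemma sumR_minus n f g : sumR n (fun i => f i - g i) = sumR n f - sumR n g.
Proof. induction n; simpl; [lra|]. rewrite IHn; lra. Qed.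

Lemma sumR_scal n c f : sumR n (fun i => c * f i) = c * sumR n f.
Proof. induction n; simpl; [lra|]. rewrite IHn; lra. Qed.

Lemma sumR_zero n f : (forall i, (i < n)%nat -> f i = 0) -> sumR n f = 0.
Proof. intros H. rewrite (sumR_ext n f (fun _ => 0)) by auto. induction n; simpl; auto. rewrite IHn; [lra|]. intros; apply H; lia. Qed.

Lemma sumR_nonneg n f : (forall i, (i < n)%nat -> 0 <= f i) -> 0 <= sumR n f.
Proof. intros H. assert (sumR n (fun _ => 0) = 0) by (apply sumR_zero; auto). rewrite <- H0. apply sumR_le. auto. Qed.

Lemma sumR_add_range m n f : sumR (m + n) f = sumR m f + sumR n (fun i => f (m + i)%nat).
Proof. induction n; simpl. rewrite Nat.add_0_r; lra. rewrite Nat.add_succ_r. simpl. rewrite IHn. lra. Qed.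

Lemma sumR_block m n f : sumR (m * n) f = sumR m (fun x => sumR n (fun y => f (x * n + y)%nat)).
Proof. induction m; simpl; auto. rewrite Nat.add_comm, sumR_add_range, IHm. f_equal. Qed.

Lemma sumR_exchange m n f : sumR m (fun i => sumR n (fun j => f i j)) = sumR n (fun j => sumR m (fun i => f i j)).
Proof. induction m; simpl. symmetry; apply sumR_zero; auto. rewrite IHm. rewrite <- sumR_plus. auto. Qed.

Lemma sumR_single n t f : (t < n)%nat -> (forall i, (i < n)%nat -> i <> t -> f i = 0) -> sumR n f = f t.
Proof. induction n; intros Ht H; [lia|]. simpl. destruct (Nat.eq_dec t n).
 - subst. rewrite sumR_zero; [lra|]. intros; apply H; lia.
 - rewrite IHn by (auto; lia). rewrite (H n) by lia. lra. Qed.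

Lemma sumR_le_single n t f : (t < n)%nat -> (forall i, (i < n)%nat -> f i <= 0) -> sumR n f <= f t.
Proof. induction n; intros Ht H; [lia|]. simpl. destruct (Nat.eq_dec t n).
 - subst. assert (sumR n f <= 0). { assert (sumR n (fun _ => 0) = 0) by (apply sumR_zero; auto). rewrite <- H0. apply sumR_le. intros; apply H; lia. } lra.
 - pose proof (IHn ltac:(lia) ltac:(intros; apply H; lia)). pose proof (H n ltac:(lia)). lra. Qed.

Lemma sumR_ge_single n t f : (t < n)%nat -> (forall i, (i < n)%nat -> 0 <= f i) -> f t <= sumR n f.
Proof. intros. assert (sumR n (fun i => - f i) <= - f t) by (apply (sumR_le_single n t (fun i => - f i)); auto; intros; specialize (H0 i H1); lra).
 assert (sumR n (fun i => - f i) = - sumR n f). { replace (- sumR n f) with ((-1) * sumR n f) by lra. rewrite <- (sumR_scal n (-1)). apply sumR_ext; intros; lra. } lra. Qed.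

Lemma sumR_abs n f : Rabs (sumR n f) <= sumR n (fun i => Rabs (f i)).
Proof. induction n; simpl. rewrite Rabs_R0; lra. eapply Rle_trans. apply Rabs_triang. lra. Qed.

Lemma sumR_const_le n f B : (forall i, (i < n)%nat -> f i <= B) -> sumR n f <= INR n * B.
Proof. induction n; intros H. simpl; lra. change (sumR (S n) f) with (sumR n f + f n). rewrite S_INR. pose proof (H n ltac:(lia)). pose proof (IHn ltac:(intros; apply H; lia)). lra. Qed.

Lemma sumR_pos_exists n f : 0 < sumR n f -> exists i, (i < n)%nat /\ 0 < f i.
Proof. intros H. destruct (classic (exists i, (i < n)%nat /\ 0 < f i)) as [|Hn]; auto.
 exfalso. assert (sumR n f <= 0). { assert (sumR n (fun _ => 0) = 0) by (apply sumR_zero; auto). rewrite <- H0. apply sumR_le. intros. apply Rnot_lt_le. intro. apply Hn; eauto. } lra. Qed.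

Lemma sumR_double_split n f : sumR (2 * n) f = sumR n (fun j => f (2 * j)%nat + f (S (2 * j))).
Proof. induction n. simpl; auto. replace (2 * S n)%nat with (S (S (2 * n))) by lia. change (sumR (S (S (2*n))) f) with (sumR (2*n) f + f (2*n)%nat + f (S (2*n))). change (sumR (S n) (fun j => f (2 * j)%nat + f (S (2 * j)))) with (sumR n (fun j => f (2 * j)%nat + f (S (2 * j))) + (f (2*n)%nat + f (S (2*n)))). rewrite IHn. lra. Qed.

Lemma lim_of_cv u l : Un_cv u l -> lim u = l.
Proof. intros H. unfold lim. destruct (excluded_middle_informative _) as [e|e].
 - destruct (constructive_indefinite_description _ e) as [l' H']. simpl. eapply UL_sequence; eauto.
 - exfalso; apply e; eauto. Qed.

Lemma lim_nocv u : ~ (exists l, Un_cv u l) -> lim u = 0.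
Proof. intros H. unfold lim. destruct (excluded_middle_informative _) as [e|e]; [contradiction|auto]. Qed.

Lemma cv_le_const u l n0 B : Un_cv u l -> (forall n, (n >= n0)%nat -> u n <= B) -> l <= B.
Proof. intros H Hb. apply Rnot_lt_le; intro Hl. destruct (H (l - B)) as [M HM]; [lra|].
 specialize (HM (Nat.max M n0) ltac:(lia)). specialize (Hb (Nat.max M n0) ltac:(lia)). unfold R_dist in HM.
 apply Rabs_def2 in HM. lra. Qed.

Lemma cv_ge_const u l n0 B : Un_cv u l -> (forall n, (n >= n0)%nat -> B <= u n) -> B <= l.
Proof. intros H Hb. apply Rnot_lt_le; intro Hl. destruct (H (B - l)) as [M HM]; [lra|].
 specialize (HM (Nat.max M n0) ltac:(lia)). specialize (Hb (Nat.max M n0) ltac:(lia)). unfold R_dist in HM.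
 apply Rabs_def2 in HM. lra. Qed.

Lemma cv_le u v l l' n0 : Un_cv u l -> Un_cv v l' -> (forall n, (n >= n0)%nat -> u n <= v n) -> l <= l'.
Proof. intros Hu Hv H. assert (Un_cv (fun n => v n - u n) (l' - l)) by (apply CV_minus; auto).
 assert (0 <= l' - l). { apply (cv_ge_const _ _ n0 0 H0). intros. specialize (H n H1). lra. } lra. Qed.

Lemma lim_le u n0 B : (forall n, (n >= n0)%nat -> u n <= B) -> 0 <= B -> lim u <= B.
Proof. intros H HB. destruct (classic (exists l, Un_cv u l)) as [[l Hl]|Hn].
 - rewrite (lim_of_cv _ _ Hl). eapply cv_le_const; eauto.
 - rewrite lim_nocv; auto. Qed.

Lemma lim_le_cv u v l' n0 : Un_cv v l' -> (forall n, (n >= n0)%nat -> u n <= v n) -> 0 <= l' -> lim u <= l'.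
Proof. intros Hv H HB. destruct (classic (exists l, Un_cv u l)) as [[l Hl]|Hn].
 - rewrite (lim_of_cv _ _ Hl). eapply cv_le; eauto.
 - rewrite lim_nocv; auto. Qed.

Lemma lim_ge0 u : (forall n, 0 <= u n) -> 0 <= lim u.
Proof. intros H. destruct (classic (exists l, Un_cv u l)) as [[l Hl]|Hn].
 - rewrite (lim_of_cv _ _ Hl). eapply (cv_ge_const _ _ 0); eauto.
 - rewrite lim_nocv; auto; lra. Qed.

Lemma cv_const c : Un_cv (fun _ => c) c.
Proof. intros e He. exists 0%nat. intros. unfold R_dist. rewrite Rminus_eq_0, Rabs_R0. auto. Qed.

Lemma cv_sumR n u l : (forall r, (r < n)%nat -> Un_cv (u r) (l r)) -> Un_cv (fun K => sumR n (fun r => u r K)) (sumR n l).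
Proof. induction n; simpl; intros H. apply cv_const. apply CV_plus. apply IHn; intros; apply H; lia. apply H; lia. Qed.

Lemma growing_bounded_cv u B : (forall n, u n <= u (S n)) -> (forall n, u n <= B) -> exists l, Un_cv u l /\ (forall n, u n <= l).
Proof. intros Hg Hb. destruct (growing_cv u Hg) as [l Hl]. exists B. intros x [i ->]. auto.
 exists l. split; auto. apply growing_ineq; auto. Qed.

Definition pp (N : nat) : R := (1 - eta N) / 2.
Definition qq (N : nat) : R := (1 + eta N) / 2.
Definition Jin (N k j : nat) (x : R) : Prop := cL N k j <= x <= cL N k j + clen N k.

Lemma eta_bounds N : (16 <= N)%nat -> 0 < eta N <= /16.
Proof. intros H. unfold eta. assert (16 <= INR N) by (replace 16 with (INR 16) by (simpl; lra); apply le_INR; auto).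
 split. apply Rinv_0_lt_compat; lra. apply Rinv_le_contravar; lra. Qed.

Lemma clen_pos N k : (16 <= N)%nat -> 0 < clen N k.
Proof. intros H. unfold clen. apply pow_lt. pose proof (eta_bounds N H). unfold eta in H0. lra. Qed.

Lemma clen_S N k : clen N (S k) = eta N * clen N k.
Proof. unfold clen, eta. simpl. auto. Qed.

Lemma cL_S N k j : cL N (S k) j = cL N k (Nat.div2 j) + (if Nat.odd j then (/ INR N) ^ k - (/ INR N) ^ (S k) else 0).
Proof. reflexivity. Qed.

Lemma cL_even N k j : cL N (S k) (2 * j) = cL N k j.
Proof. rewrite cL_S, Nat.div2_double, Nat.odd_even. lra. Qed.

Lemma cL_odd N k j : cL N (S k) (2 * j + 1) = cL N k j + clen N k - clen N (S k).
Proof. rewrite cL_S, Nat.odd_odd, Nat.div2_odd'. unfold clen. lra. Qed.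

Lemma zc_in N k j : (16 <= N)%nat -> Jin N k j (zc N k j).
Proof. intros H. pose proof (clen_pos N k H). unfold Jin, zc. lra. Qed.

Lemma Jin_even N k j x : (16 <= N)%nat -> Jin N (S k) (2 * j) x -> Jin N k j x /\ x <= zc N k j - 7/16 * clen N k.
Proof. intros H. unfold Jin, zc. rewrite cL_even, clen_S. pose proof (clen_pos N k H). pose proof (eta_bounds N H).
 intros. assert (eta N * clen N k <= /16 * clen N k) by (apply Rmult_le_compat_r; lra). lra. Qed.

Lemma Jin_odd N k j x : (16 <= N)%nat -> Jin N (S k) (2 * j + 1) x -> Jin N k j x /\ x >= zc N k j + 7/16 * clen N k.
Proof. intros H. unfold Jin, zc. rewrite cL_odd, clen_S. pose proof (clen_pos N k H). pose proof (eta_bounds N H).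
 intros. assert (eta N * clen N k <= /16 * clen N k) by (apply Rmult_le_compat_r; lra). lra. Qed.

Lemma Jin_parent N k j x : (16 <= N)%nat -> Jin N (S k) j x -> Jin N k (Nat.div2 j) x.
Proof. intros H Hx. rewrite (Nat.div2_odd j) in Hx. destruct (Nat.odd j); simpl Nat.b2n in Hx.
 - apply (Jin_odd N k _ x H Hx). - rewrite Nat.add_0_r in Hx. apply (Jin_even N k _ x H Hx). Qed.

Lemma wt_SS N k j : wt N (S (S k)) j = wt N (S k) (Nat.div2 j) *
  (if Bool.eqb (Nat.odd j) (Nat.odd (Nat.div2 j)) then qq N else pp N).
Proof. reflexivity. Qed.

Lemma pq_bounds N : (16 <= N)%nat -> 0 < pp N /\ pp N <= /2 /\ /2 <= qq N /\ qq N <= 17/32.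
Proof. intros H. pose proof (eta_bounds N H). unfold pp, qq. lra. Qed.

Lemma wt_pos N k j : (16 <= N)%nat -> 0 < wt N k j.
Proof. intros H. pose proof (pq_bounds N H). revert j. induction k; intros j. simpl; lra.
 destruct k. simpl; lra. rewrite wt_SS. apply Rmult_lt_0_compat. auto. destruct (Bool.eqb _ _); lra. Qed.

Lemma wt_children N k j : (16 <= N)%nat -> wt N (S k) (2 * j) + wt N (S k) (2 * j + 1) = wt N k j /\
  pp N * wt N k j <= wt N (S k) (2 * j) <= qq N * wt N k j /\
  pp N * wt N k j <= wt N (S k) (2 * j + 1) <= qq N * wt N k j.
Proof. intros H.
 assert (E: pp N + qq N = 1) by (unfold pp, qq; lra). pose proof (pq_bounds N H).
 destruct k.
 - simpl. lra.
 - rewrite !wt_SS. rewrite Nat.div2_double, Nat.odd_even, Nat.div2_odd', Nat.odd_odd.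
   pose proof (wt_pos N (S k) j H).
   set (w := wt N (S k) j) in *. clearbody w.
   destruct (Nat.odd j); cbn [Bool.eqb]; repeat split; nra.
Qed.

Lemma pow2_S m : (2 ^ (S m) = 2 ^ m + 2 ^ m)%nat.
Proof. simpl. lia. Qed.

Lemma pow2_pos m : (0 < 2 ^ m)%nat.
Proof. induction m; simpl; lia. Qed.

Lemma desc_split (f : nat -> R) m b : sumR (2 ^ (S m)) (fun t => f (b * 2 ^ (S m) + t)%nat) =
  sumR (2 ^ m) (fun t => f (2 * b * 2 ^ m + t)%nat) + sumR (2 ^ m) (fun t => f ((2 * b + 1) * 2 ^ m + t)%nat).
Proof. rewrite pow2_S at 1. rewrite sumR_add_range. f_equal; apply sumR_ext; intros; f_equal.
 rewrite pow2_S; ring. rewrite pow2_S; ring. Qed.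

Lemma desc_index_cases m b t : (t < 2 ^ S m)%nat ->
  (t < 2 ^ m /\ b * 2 ^ S m + t = 2 * b * 2 ^ m + t)%nat \/
  (exists t', t = 2 ^ m + t' /\ t' < 2 ^ m /\ b * 2 ^ S m + t = (2 * b + 1) * 2 ^ m + t')%nat.
Proof. intros Ht. rewrite pow2_S in *. destruct (Nat.lt_ge_cases t (2 ^ m)).
 - left. split; auto. ring.
 - right. exists (t - 2 ^ m)%nat. split; [lia|]. split; [lia|]. 
   replace t with (2 ^ m + (t - 2 ^ m))%nat at 1 by lia. ring. Qed.

Lemma desc_mass N m : (16 <= N)%nat -> forall h b, sumR (2 ^ m) (fun t => wt N (h + m) (b * 2 ^ m + t)) = wt N h b.
Proof. intros HN. induction m; intros h b.
 - simpl. rewrite Nat.add_0_r, Nat.mul_1_r, Nat.add_0_r. lra.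
 - rewrite (desc_split (fun i => wt N (h + S m) i)). replace (h + S m)%nat with (S h + m)%nat by lia.
   rewrite !IHm. apply wt_children; auto. Qed.

Lemma desc_nest N m : (16 <= N)%nat -> forall h b t x, (t < 2 ^ m)%nat -> Jin N (h + m) (b * 2 ^ m + t) x -> Jin N h b x.
Proof. intros HN. induction m; intros h b t x Ht Hx.
 - simpl in *. replace t with 0%nat in * by lia. rewrite Nat.add_0_r, Nat.mul_1_r, Nat.add_0_r in Hx. auto.
 - replace (h + S m)%nat with (S h + m)%nat in Hx by lia.
   destruct (desc_index_cases m b t Ht) as [[H1 H2]|[t' [H1 [H2 H3]]]]; [rewrite H2 in Hx|rewrite H3 in Hx].
   + apply IHm in Hx; auto. apply (Jin_even N h b x HN Hx).
   + apply IHm in Hx; auto. apply (Jin_odd N h b x HN Hx). Qed.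

Lemma desc_wt_lower N m : (16 <= N)%nat -> forall h b t, (t < 2 ^ m)%nat -> pp N ^ m * wt N h b <= wt N (h + m) (b * 2 ^ m + t).
Proof. intros HN. pose proof (pq_bounds N HN). induction m; intros h b t Ht.
 - simpl in *. replace t with 0%nat by lia. rewrite Nat.add_0_r, Nat.mul_1_r, Nat.add_0_r. lra.
 - replace (h + S m)%nat with (S h + m)%nat by lia.
   destruct (desc_index_cases m b t Ht) as [[H1 H2]|[t' [H1 [H2 H3]]]]; [rewrite H2|rewrite H3].
   + pose proof (IHm (S h) (2 * b)%nat t H1). pose proof (wt_children N h b HN).
     rewrite <- tech_pow_Rmult. pose proof (pow_le (pp N) m ltac:(lra)).
     eapply Rle_trans; [|eassumption]. replace (pp N * pp N ^ m * wt N h b) with (pp N ^ m * (pp N * wt N h b)) by ring. apply Rmult_le_compat_l; lra.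
   + pose proof (IHm (S h) (2 * b + 1)%nat t' H2). pose proof (wt_children N h b HN).
     rewrite <- tech_pow_Rmult. pose proof (pow_le (pp N) m ltac:(lra)).
     eapply Rle_trans; [|eassumption]. replace (pp N * pp N ^ m * wt N h b) with (pp N ^ m * (pp N * wt N h b)) by ring. apply Rmult_le_compat_l; lra. Qed.

Lemma desc_bounded N m : (16 <= N)%nat -> forall h b (F : R -> R) M, (forall x, Jin N h b x -> F x <= M) ->
  sumR (2 ^ m) (fun t => wt N (h + m) (b * 2 ^ m + t) * F (zc N (h + m) (b * 2 ^ m + t))) <= M * wt N h b.
Proof. intros HN h b F M HF. rewrite <- (desc_mass N m HN h b), <- sumR_scal. apply sumR_le. intros t Ht.
 pose proof (wt_pos N (h + m) (b * 2 ^ m + t) HN). assert (F (zc N (h + m) (b * 2 ^ m + t)) <= M).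
 { apply HF. eapply desc_nest; eauto. apply zc_in; auto. } nra. Qed.

Lemma inI_bounds I x : inI I x -> lo I <= x <= hi I.
Proof. unfold inI. intros [[H|[_ H]] [H'|[_ H']]]; lra. Qed.

Lemma inI_convex I x y t : inI I x -> inI I y -> x <= t <= y -> inI I t.
Proof. unfold inI. intros [Hx1 Hx2] [Hy1 Hy2] Ht. split.
 - destruct (Req_dec x t). subst; auto. left. destruct Hx1 as [H0|[_ H0]]; lra.
 - destruct (Req_dec y t). subst; auto. left. destruct Hy2 as [H0|[_ H0]]; lra. Qed.

Lemma len_ge I x y : inI I x -> inI I y -> Rabs (x - y) <= len I.
Proof. intros Hx Hy. apply inI_bounds in Hx. apply inI_bounds in Hy. unfold len.
 pose proof (Rmax_r 0 (hi I - lo I)). apply Rabs_le. lra. Qed.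

Lemma notinI_cases I y : ~ inI I y -> y <= lo I \/ hi I <= y.
Proof. unfold inI. intros H. destruct (Rle_lt_dec y (lo I)); auto. destruct (Rle_lt_dec (hi I) y); auto.
 exfalso. apply H. split; left; lra. Qed.

Lemma div2_lt j K : (j < 2 ^ S K)%nat -> (Nat.div2 j < 2 ^ K)%nat.
Proof. intros H. rewrite pow2_S in H. rewrite Nat.div2_div. apply Nat.Div0.div_lt_upper_bound. lia. Qed.

Lemma sep N K : (16 <= N)%nat -> forall j1 j2 x y, (j1 < 2 ^ K)%nat -> (j2 < 2 ^ K)%nat -> j1 <> j2 ->
  Jin N K j1 x -> Jin N K j2 y ->
  exists h b, (h < K)%nat /\ (b < 2 ^ h)%nat /\ ((x < zc N h b < y) \/ (y < zc N h b < x)).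
Proof. intros HN. induction K; intros j1 j2 x y H1 H2 Hne Hx Hy.
 - simpl in *. lia.
 - destruct (Nat.eq_dec (Nat.div2 j1) (Nat.div2 j2)) as [E|E].
   + exists K, (Nat.div2 j1). split; [lia|]. split; [apply div2_lt; auto|].
     pose proof (clen_pos N K HN).
     rewrite (Nat.div2_odd j1) in Hx. rewrite (Nat.div2_odd j2) in Hy. rewrite <- E in Hy.
     assert (Nat.odd j1 <> Nat.odd j2). { intro Ho. apply Hne. rewrite (Nat.div2_odd j1), (Nat.div2_odd j2), E, Ho. auto. }
     destruct (Nat.odd j1), (Nat.odd j2); simpl Nat.b2n in *; try congruence; rewrite ?Nat.add_0_r in *.
     * apply Jin_odd in Hx; auto. apply Jin_even in Hy; auto. lra.
     * apply Jin_even in Hx; auto. apply Jin_odd in Hy; auto. lra.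
   + apply Jin_parent in Hx; auto. apply Jin_parent in Hy; auto.
     destruct (IHK _ _ x y (div2_lt _ _ H1) (div2_lt _ _ H2) E Hx Hy) as [h [b [? [? ?]]]].
     exists h, b. repeat split; auto. Qed.

Definition atomIn N (I : itv) k j : Prop := (j < 2 ^ k)%nat /\ inI I (zc N k j).

Definition minAtom N I k jA : Prop := atomIn N I k jA /\ (forall g i, atomIn N I g i -> (k <= g)%nat).

Lemma min_exists N I : (exists k j, atomIn N I k j) -> exists k jA, minAtom N I k jA.
Proof. intros [k Hk]. revert Hk. induction k as [k IH] using (well_founded_induction Nat.lt_wf_0).
 intros [j Hj]. destruct (classic (exists g i, (g < k)%nat /\ atomIn N I g i)) as [[g [i [Hg Hi]]]|Hn].
 - apply (IH g Hg). eauto.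
 - exists k, j. split; auto. intros g i Hi. destruct (Nat.lt_ge_cases g k); auto. exfalso; apply Hn; eauto. Qed.

Lemma pow2_add a b : (2 ^ (a + b) = 2 ^ a * 2 ^ b)%nat.
Proof. apply Nat.pow_add_r. Qed.

Lemma desc_of_min N I k jA : (16 <= N)%nat -> minAtom N I k jA -> forall g i, atomIn N I g i ->
  (k <= g)%nat /\ exists t, (t < 2 ^ (g - k))%nat /\ i = (jA * 2 ^ (g - k) + t)%nat.
Proof. intros HN [HA Hmin] g i Hi. pose proof (Hmin g i Hi) as Hkg. split; auto.
 set (m := (g - k)%nat). assert (Hm : (2 ^ m <> 0)%nat) by (pose proof (pow2_pos m); lia).
 set (d := (i / 2 ^ m)%nat). set (t := (i mod 2 ^ m)%nat).
 assert (Ei : i = (d * 2 ^ m + t)%nat) by (unfold d, t; rewrite (Nat.div_mod i (2 ^ m)) at 1 by auto; ring).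
 assert (Ht : (t < 2 ^ m)%nat) by (apply Nat.mod_upper_bound; auto).
 assert (Hd : (d < 2 ^ k)%nat). { destruct Hi as [Hi _]. replace g with (k + m)%nat in Hi by (unfold m; lia).
   rewrite pow2_add in Hi. unfold d. apply Nat.Div0.div_lt_upper_bound. lia. }
 exists t. split; auto. destruct (Nat.eq_dec d jA) as [E|E]. rewrite <- E; auto.
 exfalso. assert (Hz : Jin N k d (zc N g i)).
 { apply (desc_nest N m HN k d t); auto. replace (k + m)%nat with g by (unfold m; lia). rewrite <- Ei. apply zc_in; auto. }
 destruct HA as [HA1 HA2].
 destruct (sep N k HN d jA _ _ Hd HA1 E Hz (zc_in N k jA HN)) as [h [b [Hh [Hb Hbt]]]].
 assert (Hab: atomIn N I h b). { split; auto. destruct Hi as [_ Hi].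
   destruct Hbt as [Hbt|Hbt]; [apply (inI_convex I _ _ _ Hi HA2)|apply (inI_convex I _ _ _ HA2 Hi)]; lra. }
 pose proof (Hmin h b Hab). lia. Qed.

Lemma inner_child N I k jA g i : (16 <= N)%nat -> minAtom N I k jA -> (k < g)%nat -> atomIn N I g i ->
  Rabs (zc N g i - zc N k jA) >= 7/16 * clen N k /\
  pp N ^ (g - k) * wt N k jA <= wt N g i /\
  exists ch, (ch = 2 * i \/ ch = 2 * i + 1)%nat /\ forall x, Jin N (S g) ch x -> inI I x.
Proof. intros HN Hm Hkg Hi. destruct (desc_of_min N I k jA HN Hm g i Hi) as [_ [t [Ht Ei]]].
 pose proof (clen_pos N k HN). pose proof (clen_pos N g HN).
 destruct Hm as [[_ HcI] _]. destruct Hi as [_ HzI].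
 split; [|split].
 3: destruct (g - k)%nat as [|m'] eqn:Em; [lia|].
 3: destruct (desc_index_cases m' jA t Ht) as [[H1 H2]|[t' [H1 [H2 H3]]]].
 - destruct (g - k)%nat as [|m'] eqn:Em; [lia|].
   destruct (desc_index_cases m' jA t Ht) as [[H1 H2]|[t' [H1 [H2 H3]]]].
   + assert (Jin N (S k) (2 * jA) (zc N g i)). { apply (desc_nest N m' HN (S k) (2 * jA) t); auto.
       replace (S k + m')%nat with g by lia. rewrite <- H2, <- Ei. apply zc_in; auto. }
     apply Jin_even in H3; auto. rewrite Rabs_left1; lra.
   + assert (Jin N (S k) (2 * jA + 1) (zc N g i)). { apply (desc_nest N m' HN (S k) (2 * jA + 1) t'); auto.
       replace (S k + m')%nat with g by lia. rewrite <- H3, <- Ei. apply zc_in; auto. }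
     apply Jin_odd in H4; auto. rewrite Rabs_right; lra.
 - rewrite Ei. pose proof (desc_wt_lower N (g - k) HN k jA t Ht) as W. replace (k + (g - k))%nat with g in W by lia. exact W.
 - assert (Jin N (S k) (2 * jA) (zc N g i)). { apply (desc_nest N m' HN (S k) (2 * jA) t); auto.
       replace (S k + m')%nat with g by lia. rewrite <- H2, <- Ei. apply zc_in; auto. }
   apply Jin_even in H3; auto. exists (2 * i + 1)%nat. split; auto. intros x Hx.
   apply Jin_odd in Hx; auto. destruct Hx as [Hx1 Hx2].
   assert (Jin N (S k) (2 * jA) x). { apply (desc_nest N m' HN (S k) (2 * jA) t); auto.
       replace (S k + m')%nat with g by lia. rewrite <- H2, <- Ei. auto. }
   apply Jin_even in H4; auto. apply (inI_convex I _ _ _ HzI HcI). pose proof (clen_pos N g HN). lra.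
 - assert (Jin N (S k) (2 * jA + 1) (zc N g i)). { apply (desc_nest N m' HN (S k) (2 * jA + 1) t'); auto.
       replace (S k + m')%nat with g by lia. rewrite <- H3, <- Ei. apply zc_in; auto. }
   apply Jin_odd in H4; auto. exists (2 * i)%nat. split; auto. intros x Hx.
   apply Jin_even in Hx; auto. destruct Hx as [Hx1 Hx2].
   assert (Jin N (S k) (2 * jA + 1) x). { apply (desc_nest N m' HN (S k) (2 * jA + 1) t'); auto.
       replace (S k + m')%nat with g by lia. rewrite <- H3, <- Ei. auto. }
   apply Jin_odd in H5; auto. apply (inI_convex I _ _ _ HcI HzI). pose proof (clen_pos N g HN). lra.
Qed.

Lemma decR_t (P : Prop) a b : P -> decR P a b = a.
Proof. unfold decR. destruct (excluded_middle_informative P); tauto. Qed.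
Lemma decR_f (P : Prop) a b : ~ P -> decR P a b = b.
Proof. unfold decR. destruct (excluded_middle_informative P); tauto. Qed.
Lemma decR_bounds (P : Prop) a : 0 <= a -> 0 <= decR P a 0 <= a.
Proof. intros. destruct (classic P); [rewrite decR_t|rewrite decR_f]; auto; lra. Qed.

Definition mu N I K := sumR (2 ^ K) (fun j => decR (inI I (zc N K j)) (1 * wt N K j) 0).

Lemma omega_mu N I : omega N I = lim (mu N I).
Proof. reflexivity. Qed.

Lemma mu_nonneg N I K : (16 <= N)%nat -> 0 <= mu N I K.
Proof. intros HN. apply sumR_nonneg. intros. pose proof (wt_pos N K i HN). apply decR_bounds. lra. Qed.

Lemma sum_children (f : nat -> R) K : sumR (2 ^ S K) f = sumR (2 ^ K) (fun j => f (2 * j)%nat + f (2 * j + 1)%nat).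
Proof. rewrite Nat.pow_succ_r'. rewrite sumR_double_split. apply sumR_ext. intros. repeat f_equal. lia. Qed.

Lemma Bsum N x K : (16 <= N)%nat -> sumR (2 ^ K) (fun j => decR (Jin N K j x) (wt N K j) 0) <= qq N ^ K.
Proof. intros HN. pose proof (pq_bounds N HN). induction K.
 - simpl. pose proof (decR_bounds (Jin N 0 0 x) 1). simpl in H0. lra.
 - rewrite sum_children. eapply Rle_trans; [|rewrite <- tech_pow_Rmult; apply Rmult_le_compat_l; [lra|exact IHK]].
   rewrite <- sumR_scal. apply sumR_le. intros j Hj. destruct (wt_children N K j HN) as [E [W1 W2]].
   pose proof (wt_pos N K j HN).
   destruct (classic (Jin N (S K) (2 * j) x)) as [H1|H1].
   + rewrite decR_t by auto. assert (~ Jin N (S K) (2 * j + 1) x).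
     { intro H2. apply Jin_even in H1; auto. apply Jin_odd in H2; auto. pose proof (clen_pos N K HN). lra. }
     rewrite decR_f by auto. rewrite decR_t by (apply Jin_even in H1; tauto). lra.
   + rewrite (decR_f _ _ _ H1). destruct (classic (Jin N (S K) (2 * j + 1) x)) as [H2|H2].
     * rewrite decR_t by auto. rewrite decR_t by (apply Jin_odd in H2; tauto). lra.
     * rewrite decR_f by auto. pose proof (decR_bounds (Jin N K j x) (wt N K j)). nra. Qed.

Lemma pair_bd N I K j x y : Jin N K j x -> Jin N K j y -> inI I x -> ~ inI I y -> Jin N K j (lo I) \/ Jin N K j (hi I).
Proof. unfold Jin. intros Hx Hy Ix Iy. apply inI_bounds in Ix. apply notinI_cases in Iy. destruct Iy; [left|right]; lra. Qed.

Lemma mu_step N I K : (16 <= N)%nat -> Rabs (mu N I (S K) - mu N I K) <= 2 * qq N ^ K.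
Proof. intros HN. unfold mu. rewrite sum_children. rewrite <- sumR_minus.
 eapply Rle_trans. apply sumR_abs.
 replace (2 * qq N ^ K) with (qq N ^ K + qq N ^ K) by ring.
 eapply Rle_trans; [|apply Rplus_le_compat; [apply (Bsum N (lo I) K HN)|apply (Bsum N (hi I) K HN)]].
 rewrite <- sumR_plus. apply sumR_le. intros j Hj.
 destruct (wt_children N K j HN) as [E [W1 W2]]. pose proof (wt_pos N K j HN).
 pose proof (wt_pos N (S K) (2*j) HN). pose proof (wt_pos N (S K) (2*j+1) HN).
 assert (Z0 : Jin N K j (zc N K j)) by (apply zc_in; auto).
 assert (Z1 : Jin N K j (zc N (S K) (2 * j))) by (apply (Jin_even N K j); auto; apply zc_in; auto).
 assert (Z2 : Jin N K j (zc N (S K) (2 * j + 1))) by (apply (Jin_odd N K j); auto; apply zc_in; auto).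
 pose proof (decR_bounds (Jin N K j (lo I)) (wt N K j) ltac:(lra)).
 pose proof (decR_bounds (Jin N K j (hi I)) (wt N K j) ltac:(lra)).
 destruct (classic ((inI I (zc N K j) <-> inI I (zc N (S K) (2 * j))) /\ (inI I (zc N K j) <-> inI I (zc N (S K) (2 * j + 1))))) as [[A1 A2]|Hd].
 - destruct (classic (inI I (zc N K j))) as [Hin|Hin].
   + rewrite !decR_t by tauto. rewrite Rmult_1_l, Rmult_1_l, Rmult_1_l. rewrite Rabs_right; lra.
   + rewrite !decR_f by tauto. rewrite Rabs_right; lra.
 - assert (Hb : Jin N K j (lo I) \/ Jin N K j (hi I)).
   { destruct (classic (inI I (zc N K j))) as [Hin|Hin];
     destruct (classic (inI I (zc N (S K) (2 * j)))) as [Hin1|Hin1];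
     destruct (classic (inI I (zc N (S K) (2 * j + 1)))) as [Hin2|Hin2];
     first [exfalso; apply Hd; tauto
           | eapply pair_bd; [exact Z0|exact Z1|assumption|assumption]
           | eapply pair_bd; [exact Z0|exact Z2|assumption|assumption]
           | eapply pair_bd; [exact Z1|exact Z0|assumption|assumption]
           | eapply pair_bd; [exact Z2|exact Z0|assumption|assumption]]. }
   assert (wt N K j <= decR (Jin N K j (lo I)) (wt N K j) 0 + decR (Jin N K j (hi I)) (wt N K j) 0).
   { destruct Hb as [Hb|Hb]; [rewrite (decR_t _ _ _ Hb)|rewrite (decR_t (Jin N K j (hi I)) _ _ Hb)]; lra. }
   pose proof (decR_bounds (inI I (zc N K j)) (1 * wt N K j) ltac:(lra)).
   pose proof (decR_bounds (inI I (zc N (S K) (2 * j))) (1 * wt N (S K) (2 * j)) ltac:(lra)).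
   pose proof (decR_bounds (inI I (zc N (S K) (2 * j + 1))) (1 * wt N (S K) (2 * j + 1)) ltac:(lra)).
   apply Rabs_le. lra. Qed.

Lemma abs_le_inv x y : Rabs x <= y -> - y <= x <= y.
Proof. unfold Rabs. destruct (Rcase_abs x); lra. Qed.

Lemma pow_cv0 x : 0 <= x < 1 -> Un_cv (fun n => x ^ n) 0.
Proof. intros Hx e He. destruct (pow_lt_1_zero x ltac:(rewrite Rabs_right; lra) e He) as [M HM].
 exists M. intros n Hn. unfold R_dist. rewrite Rminus_0_r. auto. Qed.

Lemma mu_cv N I : (16 <= N)%nat -> exists l, Un_cv (mu N I) l.
Proof. intros HN. pose proof (pq_bounds N HN). set (q := qq N) in *.
 set (v := fun K => mu N I K + 2 / (1 - q) * q ^ K).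
 assert (Hdec : Un_decreasing v).
 { intros K. unfold v. pose proof (mu_step N I K HN). apply abs_le_inv in H0.
   change (q ^ S K) with (q * q ^ K). assert (2 / (1 - q) * (q * q ^ K) = 2 / (1 - q) * q ^ K - 2 * q ^ K) by (field; lra). fold q in H0. lra. }
 assert (Hlb : has_lb v).
 { exists 0. intros r [K ->]. unfold opp_seq, v. pose proof (mu_nonneg N I K HN). pose proof (pow_le q K ltac:(lra)).
   assert (0 <= 2 / (1 - q)) by (apply Rle_mult_inv_pos; lra). pose proof (Rmult_le_pos _ _ H2 H1). lra. }
 destruct (decreasing_cv v Hdec Hlb) as [l Hl]. exists (l - 2 / (1 - q) * 0).
 assert (Un_cv (fun K => v K - 2 / (1 - q) * q ^ K) (l - 2 / (1 - q) * 0)).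
 { apply CV_minus; auto. apply CV_mult. apply cv_const. apply pow_cv0. lra. }
 intros e He. destruct (H0 e He) as [M HM]. exists M. intros n Hn. specialize (HM n Hn). unfold v in HM.
 replace (mu N I n + 2 / (1 - q) * q ^ n - 2 / (1 - q) * q ^ n) with (mu N I n) in HM by ring. auto. Qed.

Definition Tg N I g := sumR (2 ^ g) (fun j => decR (inI I (zc N g j)) (sw N g j) 0).
Definition Sn N I n := sumR n (fun g => Tg N I g).

Lemma sigma_Sn N I : Defs.sigma N I = lim (Sn N I).
Proof. reflexivity. Qed.

Lemma clen_eta N k : clen N k = eta N ^ k.
Proof. reflexivity. Qed.

Lemma sw_eq N g i : sw N g i = clen N g ^ 2 / wt N g i.
Proof. unfold sw, clen. rewrite Nat.mul_comm, pow_mult. reflexivity. Qed.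

Lemma sw_pos N g i : (16 <= N)%nat -> 0 < sw N g i.
Proof. intros HN. rewrite sw_eq. pose proof (clen_pos N g HN). pose proof (wt_pos N g i HN).
 apply Rdiv_lt_0_compat; nra. Qed.

Lemma Tg_nonneg N I g : (16 <= N)%nat -> 0 <= Tg N I g.
Proof. intros HN. apply sumR_nonneg. intros. apply decR_bounds. pose proof (sw_pos N g i HN). lra. Qed.

Lemma wt_lower0 N g j : (16 <= N)%nat -> (j < 2 ^ g)%nat -> pp N ^ g <= wt N g j.
Proof. intros HN Hj. pose proof (desc_wt_lower N g HN 0 0 j Hj). simpl in H. rewrite Rmult_1_r in H. auto. Qed.

Lemma pow_frac x y z g : z <> 0 -> x ^ g * (y ^ g / z ^ g) = (x * y / z) ^ g.
Proof. intros Hz. induction g. simpl; field. simpl. rewrite <- IHg. field. split; auto. apply pow_nonzero; auto. Qed.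

Lemma Tg_bound N I g : (16 <= N)%nat -> Tg N I g <= (/2) ^ g.
Proof. intros HN. pose proof (pq_bounds N HN). pose proof (eta_bounds N HN).
 unfold Tg. eapply Rle_trans. apply (sumR_const_le _ _ (clen N g ^ 2 / pp N ^ g)).
 - intros i Hi. pose proof (decR_bounds (inI I (zc N g i)) (sw N g i) ltac:(pose proof (sw_pos N g i HN); lra)).
   eapply Rle_trans. apply H1. rewrite sw_eq. pose proof (wt_lower0 N g i HN Hi). pose proof (pow_lt (pp N) g ltac:(lra)).
   apply Rmult_le_compat_l. pose proof (clen_pos N g HN); nra. apply Rinv_le_contravar; lra.
 - rewrite pow_INR. simpl (INR 2). rewrite clen_eta. rewrite <- pow_mult. rewrite Nat.mul_comm, pow_mult.
   rewrite pow_frac by lra. apply pow_incr. split.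
   + apply Rmult_le_pos. apply Rmult_le_pos. lra. apply pow_le; lra. apply Rlt_le, Rinv_0_lt_compat; lra.
   + assert (/ pp N <= 32/15). { assert (Hp: 15/32 <= pp N) by (unfold pp; lra). apply (Rinv_le_contravar) in Hp; [|lra]. 
       replace (/ (15/32)) with (32/15) in Hp by field. auto. }
     unfold Rdiv. simpl. assert (0 <= eta N * eta N <= /256) by nra. pose proof (Rinv_0_lt_compat (pp N) ltac:(lra)). nra. Qed.

Lemma geom_half n : sumR n (fun g => (/2) ^ g) = 2 - 2 * (/2) ^ n.
Proof. induction n. simpl; lra. simpl sumR. rewrite IHn. simpl. lra. Qed.

Lemma Sn_bound N I n : (16 <= N)%nat -> 0 <= Sn N I n <= 2.
Proof. intros HN. unfold Sn. split. apply sumR_nonneg; intros; apply Tg_nonneg; auto.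
 eapply Rle_trans. apply sumR_le. intros. apply (Tg_bound N I i HN). rewrite geom_half.
 pose proof (pow_le (/2) n ltac:(lra)). lra. Qed.

Lemma sigma_cv N I : (16 <= N)%nat -> Un_cv (Sn N I) (Defs.sigma N I) /\ (forall n, Sn N I n <= Defs.sigma N I) /\ 0 <= Defs.sigma N I.
Proof. intros HN. destruct (growing_bounded_cv (Sn N I) 2) as [l [Hl Hle]].
 - intros n. unfold Sn. simpl. pose proof (Tg_nonneg N I n HN). lra.
 - intros n. apply Sn_bound; auto.
 - rewrite sigma_Sn, (lim_of_cv _ _ Hl). split; auto. split; auto. pose proof (Sn_bound N I 0 HN). specialize (Hle 0%nat). lra. Qed.

Lemma pow_frac_div x y m : y <> 0 -> x ^ m / y ^ m = (x / y) ^ m.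
Proof. intros Hy. induction m. simpl; field. simpl. rewrite <- IHm. field. split; auto. apply pow_nonzero; auto. Qed.

Definition Wc N k jA := (wt N k jA / clen N k) ^ 2.

Lemma Tg_below N I k jA g : (16 <= N)%nat -> minAtom N I k jA -> (g < k)%nat -> Tg N I g = 0.
Proof. intros HN Hm Hg. apply sumR_zero. intros i Hi. apply decR_f. intro H. destruct Hm as [_ Hm].
 specialize (Hm g i (conj Hi H)). lia. Qed.

Lemma Tg_k N I k jA : (16 <= N)%nat -> minAtom N I k jA -> Tg N I k = sw N k jA.
Proof. intros HN Hm. unfold Tg. rewrite (sumR_single _ jA).
 - apply decR_t. apply Hm.
 - apply Hm.
 - intros i Hi Hne. apply decR_f. intro H. destruct (desc_of_min N I k jA HN Hm k i (conj Hi H)) as [_ [t [Ht Et]]].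
   rewrite Nat.sub_diag in *. simpl in Ht, Et. lia. Qed.

Lemma per_i N I k jA g i K : (16 <= N)%nat -> minAtom N I k jA -> (k < g)%nat -> (i < 2 ^ g)%nat -> (S g <= K)%nat ->
  decR (inI I (zc N g i)) (sw N g i) 0 * Wc N k jA <=
  3 * (/2) ^ (g - k) * sumR (2 ^ (K - g)) (fun t => decR (inI I (zc N K (i * 2 ^ (K - g) + t))) (1 * wt N K (i * 2 ^ (K - g) + t)) 0).
Proof. intros HN Hm Hkg Hi HK. pose proof (pq_bounds N HN). pose proof (eta_bounds N HN).
 assert (Hsum0 : 0 <= sumR (2 ^ (K - g)) (fun t => decR (inI I (zc N K (i * 2 ^ (K - g) + t))) (1 * wt N K (i * 2 ^ (K - g) + t)) 0)).
 { apply sumR_nonneg. intros. apply decR_bounds. pose proof (wt_pos N K (i * 2 ^ (K - g) + i0) HN). lra. }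
 assert (HW : 0 <= Wc N k jA) by (unfold Wc; apply pow2_ge_0).
 destruct (classic (inI I (zc N g i))) as [Hz|Hz]; [|rewrite decR_f by auto; rewrite Rmult_0_l;
   apply Rmult_le_pos; auto; apply Rmult_le_pos; [lra|apply pow_le; lra]].
 rewrite decR_t by auto.
 destruct (inner_child N I k jA g i HN Hm Hkg (conj Hi Hz)) as [_ [Hwt [ch [Hch Hin]]]].
 assert (Hleaf : wt N (S g) ch <= sumR (2 ^ (K - g)) (fun t => decR (inI I (zc N K (i * 2 ^ (K - g) + t))) (1 * wt N K (i * 2 ^ (K - g) + t)) 0)).
 { destruct (K - g)%nat as [|d] eqn:Ed; [lia|]. replace K with (S g + d)%nat by lia.
   rewrite (desc_split (fun j => decR (inI I (zc N (S g + d) j)) (1 * wt N (S g + d) j) 0)).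
   assert (Hc : forall c, (forall x, Jin N (S g) c x -> inI I x) ->
     sumR (2 ^ d) (fun t => decR (inI I (zc N (S g + d) (c * 2 ^ d + t))) (1 * wt N (S g + d) (c * 2 ^ d + t)) 0) = wt N (S g) c).
   { intros c Hcx. rewrite <- (desc_mass N d HN (S g) c). apply sumR_ext. intros t Ht. rewrite decR_t. ring.
     apply Hcx. apply (desc_nest N d HN (S g) c t); auto. apply zc_in; auto. }
   assert (Hnn : forall c, 0 <= sumR (2 ^ d) (fun t => decR (inI I (zc N (S g + d) (c * 2 ^ d + t))) (1 * wt N (S g + d) (c * 2 ^ d + t)) 0)).
   { intros c. apply sumR_nonneg. intros. apply decR_bounds. pose proof (wt_pos N (S g + d) (c * 2 ^ d + i0) HN). lra. }
   destruct Hch as [-> | ->].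
   - rewrite (Hc _ Hin). pose proof (Hnn (2 * i + 1)%nat). lra.
   - rewrite (Hc _ Hin). pose proof (Hnn (2 * i)%nat). lra. }
 assert (Hch_w : pp N * wt N g i <= wt N (S g) ch). { destruct (wt_children N g i HN) as [_ [A1 A2]]. destruct Hch as [-> | ->]; lra. }
 eapply Rle_trans; [|apply Rmult_le_compat_l; [apply Rmult_le_pos; [lra|apply pow_le; lra]|exact Hleaf]].
 set (m := (g - k)%nat) in *. assert (Eg : g = (k + m)%nat) by (unfold m; lia).
 rewrite sw_eq. unfold Wc. rewrite Eg, !clen_eta, pow_add.
 set (E := eta N ^ k). set (X := eta N ^ m). set (Y := pp N ^ m).
 set (wA := wt N k jA) in *. set (wg := wt N (k + m) i) in *. rewrite Eg in Hwt. fold wg in Hwt.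
 set (wc := wt N (S g) ch) in *.
 assert (0 < E) by (apply pow_lt; lra). assert (0 < X) by (apply pow_lt; lra). assert (0 < Y) by (apply pow_lt; lra).
 assert (0 < wA) by (apply wt_pos; auto). assert (0 < wg) by (apply wt_pos; auto).
 assert (HXY : (X / Y) ^ 2 <= (/2) ^ m).
 { unfold X, Y. rewrite pow_frac_div by lra. rewrite <- pow_mult, Nat.mul_comm, pow_mult. apply pow_incr. split.
   apply pow2_ge_0. assert (15/32 <= pp N) by (unfold pp; lra).
   assert (eta N / pp N <= 2/15). { apply Rmult_le_reg_r with (pp N). lra. unfold Rdiv. rewrite Rmult_assoc, Rinv_l by lra. nra. }
   assert (0 <= eta N / pp N) by (apply Rle_mult_inv_pos; lra). nra. }
 assert (Hgoal : (X * wA) ^ 2 / wg <= 3 * (X / Y) ^ 2 * wc).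
 { assert (wA * Y <= wg) by (unfold Y; lra). assert (wg <= 3 * wc) by (assert (15/32 <= pp N) by (unfold pp; lra); rewrite Eg in Hch_w; fold wg in Hch_w; nra).
   assert ((X * wA) ^ 2 * Y ^ 2 <= X ^ 2 * wg ^ 2) by (replace ((X*wA)^2*Y^2) with (X^2 * (wA*Y)^2) by ring; apply Rmult_le_compat_l; [apply pow2_ge_0|]; apply pow_incr; nra).
   replace ((X / Y) ^ 2) with (X ^ 2 / Y ^ 2) by (field; lra).
   apply Rmult_le_reg_r with (wg * Y ^ 2). apply Rmult_lt_0_compat; [lra|apply pow_lt; lra].
   replace ((X * wA) ^ 2 / wg * (wg * Y ^ 2)) with ((X * wA) ^ 2 * Y ^ 2) by (field; lra).
   replace (3 * (X ^ 2 / Y ^ 2) * wc * (wg * Y ^ 2)) with (3 * X ^ 2 * wc * wg) by (field; lra). nra. }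
 replace ((E * X) ^ 2 / wg * (wA / E) ^ 2) with ((X * wA) ^ 2 / wg) by (field; lra).
 rewrite <- Eg. fold wc. eapply Rle_trans. exact Hgoal. apply Rmult_le_compat_r. unfold wc; pose proof (wt_pos N (S g) ch HN); lra. lra. Qed.

Lemma Tg_above N I k jA g K : (16 <= N)%nat -> minAtom N I k jA -> (k < g)%nat -> (S g <= K)%nat ->
  Tg N I g * Wc N k jA <= 3 * (/2) ^ (g - k) * mu N I K.
Proof. intros HN Hm Hkg HK. unfold Tg, mu. rewrite Rmult_comm, <- sumR_scal.
 replace (2 ^ K)%nat with (2 ^ g * 2 ^ (K - g))%nat by (rewrite <- pow2_add; f_equal; lia).
 rewrite sumR_block, <- sumR_scal. apply sumR_le. intros i Hi. rewrite Rmult_comm. apply per_i; auto. Qed.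

Lemma Sn_k N I k jA : (16 <= N)%nat -> minAtom N I k jA -> Sn N I (S k) = sw N k jA.
Proof. intros HN Hm. unfold Sn. simpl. rewrite sumR_zero. rewrite (Tg_k N I k jA HN Hm). ring.
 intros. apply (Tg_below N I k jA); auto. Qed.

Lemma Sn_main N I k jA : (16 <= N)%nat -> minAtom N I k jA -> forall d K, (S k + d <= K)%nat ->
  Sn N I (S k + d) * Wc N k jA <= sw N k jA * Wc N k jA + 3 * (1 - (/2) ^ d) * mu N I K.
Proof. intros HN Hm d. induction d; intros K HK.
 - rewrite Nat.add_0_r, (Sn_k N I k jA HN Hm). simpl. lra.
 - replace (S k + S d)%nat with (S (S k + d)) by lia. change (Sn N I (S (S k + d))) with (Sn N I (S k + d) + Tg N I (S k + d)).
   pose proof (IHd K ltac:(lia)). pose proof (Tg_above N I k jA (S k + d) K HN Hm ltac:(lia) ltac:(lia)).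
   replace (S k + d - k)%nat with (S d) in H0 by lia. rewrite <- tech_pow_Rmult in *. lra. Qed.

Lemma sigma_ge_sc N I k jA : (16 <= N)%nat -> minAtom N I k jA -> sw N k jA <= Defs.sigma N I.
Proof. intros HN Hm. destruct (sigma_cv N I HN) as [_ [H _]]. rewrite <- (Sn_k N I k jA HN Hm). auto. Qed.

Lemma sigma_main N I k jA : (16 <= N)%nat -> minAtom N I k jA ->
  (Defs.sigma N I - sw N k jA) * Wc N k jA <= 3 * omega N I.
Proof. intros HN Hm. destruct (sigma_cv N I HN) as [Hcv _]. destruct (mu_cv N I HN) as [l Hl].
 rewrite omega_mu, (lim_of_cv _ _ Hl).
 assert (Hc : Un_cv (fun n => Sn N I n * Wc N k jA - sw N k jA * Wc N k jA) (Defs.sigma N I * Wc N k jA - sw N k jA * Wc N k jA)).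
 { apply CV_minus. apply CV_mult; auto. apply cv_const. apply cv_const. }
 replace ((Defs.sigma N I - sw N k jA) * Wc N k jA) with (Defs.sigma N I * Wc N k jA - sw N k jA * Wc N k jA) by ring.
 apply (cv_le_const _ _ (S k) _ Hc). intros n Hn.
 replace n with (S k + (n - S k))%nat by lia.
 assert (H3 : Un_cv (fun K => 3 * mu N I K) (3 * l)) by (apply CV_mult; auto; apply cv_const).
 apply (cv_le (fun _ => Sn N I (S k + (n - S k)) * Wc N k jA - sw N k jA * Wc N k jA) _ _ _ (S k + (n - S k))%nat (cv_const _) H3).
 intros K HK. pose proof (Sn_main N I k jA HN Hm (n - S k) K HK). pose proof (mu_nonneg N I K HN).
 pose proof (pow_le (/2) (n - S k) ltac:(lra)).
 assert ((/2) ^ (n - S k) * mu N I K >= 0) by (apply Rle_ge, Rmult_le_pos; lra). nra. Qed.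

Lemma sigma_single N I k jA : (16 <= N)%nat -> minAtom N I k jA -> (forall g i, (k < g)%nat -> ~ atomIn N I g i) ->
  Defs.sigma N I = sw N k jA.
Proof. intros HN Hm Hno. destruct (sigma_cv N I HN) as [Hcv _].
 assert (forall n, (n >= S k)%nat -> Sn N I n = sw N k jA).
 { intros n Hn. replace n with (S k + (n - S k))%nat by lia. induction (n - S k)%nat.
   - rewrite Nat.add_0_r. apply (Sn_k N I k jA HN Hm).
   - replace (S k + S n0)%nat with (S (S k + n0)) by lia. change (Sn N I (S (S k + n0))) with (Sn N I (S k + n0) + Tg N I (S k + n0)). rewrite IHn0.
     unfold Tg. rewrite sumR_zero. ring. intros i Hi. apply decR_f. intro Hin. apply (Hno (S k + n0)%nat i). lia. split; auto. }
 apply Rle_antisym.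
 - apply (cv_le_const _ _ (S k) _ Hcv). intros. rewrite H; auto. lra.
 - apply (cv_ge_const _ _ (S k) _ Hcv). intros. rewrite H; auto. lra. Qed.

Lemma abs0 x : Rabs x <= 0 -> x = 0.
Proof. unfold Rabs. destruct (Rcase_abs x); lra. Qed.

Definition Tot n (F : nat -> nat -> R) := sumR n (fun k => sumR (2 ^ k) (fun j => F k j)).

Lemma Tot_lin n F G H al be ga : Tot n (fun k j => al * F k j + be * G k j + ga * H k j) = al * Tot n F + be * Tot n G + ga * Tot n H.
Proof. unfold Tot. rewrite <- !sumR_scal, <- !sumR_plus. apply sumR_ext. intros.
 rewrite <- !sumR_scal, <- !sumR_plus. auto. Qed.

Lemma Tot_le_single n F k jA : (k < n)%nat -> (jA < 2 ^ k)%nat -> (forall k j, F k j <= 0) -> Tot n F <= F k jA.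
Proof. intros Hk Hj HF. unfold Tot. eapply Rle_trans. apply (sumR_le_single n k). auto.
 intros. eapply Rle_trans. apply (sumR_le _ _ (fun _ => 0)). auto. rewrite sumR_zero; auto; lra.
 apply sumR_le_single; auto. Qed.

Definition uu N I c k j := (zc N k j - c) / len I.

Lemma u_sq_le N I c k j : inI I c -> inI I (zc N k j) -> (uu N I c k j) ^ 2 <= 1.
Proof. intros Hc Hz. pose proof (len_ge I _ _ Hz Hc). unfold uu. destruct (Req_dec (len I) 0) as [E|E].
 - rewrite E in H. assert (zc N k j - c = 0) by (apply abs0; lra).
   rewrite H0. unfold Rdiv. rewrite Rmult_0_l. lra.
 - assert (0 < len I) by (pose proof (Rabs_pos (zc N k j - c)); lra).
   replace (((zc N k j - c) / len I) ^ 2) with ((zc N k j - c) ^ 2 / (len I) ^ 2) by (field; auto).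
   apply Rmult_le_reg_r with (len I ^ 2). apply pow_lt; auto. unfold Rdiv. rewrite Rmult_assoc, Rinv_l, Rmult_1_r, Rmult_1_l.
   rewrite <- (Rsqr_pow2 (len I)), <- Rsqr_pow2. rewrite Rsqr_abs. apply Rsqr_incr_1; auto. apply Rabs_pos. lra.
   apply pow_nonzero; auto. Qed.

Definition ff N I k j := decR (inI I (zc N k j)) (sw N k j) 0.

Lemma dbl_point N I c k j k' j' : inI I c ->
  decR (inI I (zc N k j) /\ inI I (zc N k' j')) (sw N k j * sw N k' j' * (zc N k j - zc N k' j') ^ 2 / len I ^ 2) 0
  = ff N I k j * ff N I k' j' * (uu N I c k j - uu N I c k' j') ^ 2.
Proof. intros Hc. unfold ff. destruct (classic (inI I (zc N k j))) as [H1|H1];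
 destruct (classic (inI I (zc N k' j'))) as [H2|H2].
 - rewrite decR_t by tauto. rewrite !decR_t by auto. unfold uu. destruct (Req_dec (len I) 0) as [E|E].
   + pose proof (len_ge I _ _ H1 Hc). pose proof (len_ge I _ _ H2 Hc). rewrite E in *.
     assert (Z1 : zc N k j - c = 0) by (apply abs0; lra).
     assert (Z2 : zc N k' j' - c = 0) by (apply abs0; lra).
     replace (zc N k j - zc N k' j') with 0 by lra. rewrite Z1, Z2. unfold Rdiv. simpl. ring.
   + field. auto.
 - rewrite decR_f by tauto. rewrite (decR_f (inI I (zc N k' j'))) by auto. ring.
 - rewrite decR_f by tauto. rewrite (decR_f (inI I (zc N k j))) by auto. ring.
 - rewrite decR_f by tauto. rewrite (decR_f (inI I (zc N k j))) by auto. ring. Qed.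

Lemma Dn_eq N I c n : inI I c ->
  sumR n (fun k => sumR n (fun k' => sumR (2 ^ k) (fun j => sumR (2 ^ k') (fun j' =>
    decR (inI I (zc N k j) /\ inI I (zc N k' j')) (sw N k j * sw N k' j' * (zc N k j - zc N k' j') ^ 2 / len I ^ 2) 0))))
  = 2 * Tot n (ff N I) * Tot n (fun k j => ff N I k j * uu N I c k j ^ 2) - 2 * (Tot n (fun k j => ff N I k j * uu N I c k j)) ^ 2.
Proof. intros Hc.
 set (T1 := Tot n (ff N I)). set (T2 := Tot n (fun k j => ff N I k j * uu N I c k j ^ 2)). set (T3 := Tot n (fun k j => ff N I k j * uu N I c k j)).
 transitivity (Tot n (fun k j => T1 * (ff N I k j * uu N I c k j ^ 2) + T2 * ff N I k j + (-2 * T3) * (ff N I k j * uu N I c k j))).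
 - unfold Tot. apply sumR_ext. intros k Hk. rewrite sumR_exchange. apply sumR_ext. intros j Hj.
   transitivity (Tot n (fun k' j' => (ff N I k j * uu N I c k j ^ 2) * ff N I k' j' + ff N I k j * (ff N I k' j' * uu N I c k' j' ^ 2) + (-2 * ff N I k j * uu N I c k j) * (ff N I k' j' * uu N I c k' j'))).
   + unfold Tot. apply sumR_ext. intros k' _. apply sumR_ext. intros j' _. rewrite (dbl_point N I c); auto. ring.
   + rewrite Tot_lin. fold T1 T2 T3. ring.
 - rewrite Tot_lin. fold T1 T2 T3. ring. Qed.

Lemma Dn_bound N I k jA n : (16 <= N)%nat -> minAtom N I k jA -> (S k <= n)%nat ->
  sumR n (fun k1 => sumR n (fun k' => sumR (2 ^ k1) (fun j => sumR (2 ^ k') (fun j' =>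
    decR (inI I (zc N k1 j) /\ inI I (zc N k' j')) (sw N k1 j * sw N k' j' * (zc N k1 j - zc N k' j') ^ 2 / len I ^ 2) 0))))
  <= 2 * Sn N I n * (Sn N I n - sw N k jA).
Proof. intros HN Hm Hn. destruct Hm as [[HjA HcI] Hmin] eqn:Hm'.
 rewrite (Dn_eq N I (zc N k jA) n HcI).
 assert (E1 : Tot n (ff N I) = Sn N I n) by reflexivity. rewrite E1.
 assert (Hs : 0 <= Sn N I n) by (apply Sn_bound; auto).
 assert (HT2 : Tot n (fun k0 j => ff N I k0 j * uu N I (zc N k jA) k0 j ^ 2) <= Sn N I n - sw N k jA).
 { assert (Tot n (fun k0 j => 1 * (ff N I k0 j * uu N I (zc N k jA) k0 j ^ 2) + (-1) * ff N I k0 j + 0 * ff N I k0 j) <= -1 * sw N k jA).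
   { eapply Rle_trans. apply (Tot_le_single n _ k jA); auto.
     - intros k0 j. unfold ff. destruct (classic (inI I (zc N k0 j))) as [Hz|Hz].
       + rewrite decR_t by auto. pose proof (u_sq_le N I _ k0 j HcI Hz). pose proof (sw_pos N k0 j HN). nra.
       + rewrite decR_f by auto. lra.
     - unfold ff, uu. rewrite decR_t by auto. unfold Rminus. rewrite Rplus_opp_r. unfold Rdiv. rewrite Rmult_0_l. lra. }
   rewrite Tot_lin, E1 in H. lra. }
 pose proof (pow2_ge_0 (Tot n (fun k0 j => ff N I k0 j * uu N I (zc N k jA) k0 j))).
 assert (2 * Sn N I n * Tot n (fun k0 j => ff N I k0 j * uu N I (zc N k jA) k0 j ^ 2) <= 2 * Sn N I n * (Sn N I n - sw N k jA)).
 { apply Rmult_le_compat_l; lra. } lra. Qed.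

Lemma dbl_main N I k jA : (16 <= N)%nat -> minAtom N I k jA ->
  sigma_dbl N I <= 2 * Defs.sigma N I * (Defs.sigma N I - sw N k jA).
Proof. intros HN Hm. destruct (sigma_cv N I HN) as [Hcv [_ Hs0]]. pose proof (sigma_ge_sc N I k jA HN Hm).
 unfold sigma_dbl. apply (lim_le_cv _ (fun n => 2 * Sn N I n * (Sn N I n - sw N k jA)) _ (S k)).
 - apply CV_mult. apply CV_mult. apply cv_const. auto. apply CV_minus; auto. apply cv_const.
 - intros n Hn. apply Dn_bound; auto.
 - apply Rmult_le_pos; lra. Qed.

Lemma inv_pow_mul x m : x <> 0 -> (/ x) ^ m * x ^ m = 1.
Proof. intros Hx. rewrite <- Rpow_mult_distr, Rinv_l by auto. apply pow1. Qed.

Lemma shell N c L (F : R -> R) : (16 <= N)%nat -> (forall x, F x <= L) -> (forall x, 0 <= F x) ->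
  (forall x, 0 < Rabs (x - c) -> F x <= / Rabs (x - c)) ->
  forall m h b t d, (t < 2 ^ m)%nat -> (m <= d)%nat -> Jin N (h + m) (b * 2 ^ m + t) c ->
  sumR (2 ^ d) (fun t' => wt N (h + d) (b * 2 ^ d + t') * F (zc N (h + d) (b * 2 ^ d + t')))
  <= (L + / clen N (h + m) - / clen N h * (/ pp N) ^ m) * wt N (h + m) (b * 2 ^ m + t).
Proof. intros HN HFL HF0 HFc. pose proof (pq_bounds N HN). pose proof (eta_bounds N HN). induction m; intros h b t d Ht Hd Hc.
 - simpl in Ht. replace t with 0%nat by lia. rewrite Nat.add_0_r. simpl (2 ^ 0)%nat. rewrite Nat.mul_1_r, Nat.add_0_r.
   simpl pow. replace (L + / clen N h - / clen N h * 1) with L by ring.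
   apply desc_bounded; auto.
 - destruct d as [|d']; [lia|].
   rewrite (desc_split (fun i => wt N (h + S d') i * F (zc N (h + S d') i))).
   replace (h + S d')%nat with (S h + d')%nat by lia.
   pose proof (clen_pos N h HN) as Hch.
   assert (Hsib : forall e, (e < 2)%nat -> (forall x, Jin N (S h) (2 * b + e) x -> 2 / clen N h >= F x) ->
       sumR (2 ^ d') (fun t' => wt N (S h + d') ((2 * b + e) * 2 ^ d' + t') * F (zc N (S h + d') ((2 * b + e) * 2 ^ d' + t')))
       <= 2 / clen N h * wt N h b).
   { intros e He HF. eapply Rle_trans. apply (desc_bounded N d' HN (S h) (2 * b + e) F (2 / clen N h)). intros x Hx. apply Rge_le, HF, Hx.
     destruct (wt_children N h b HN) as [W1 _]. pose proof (wt_pos N (S h) (2 * b) HN). pose proof (wt_pos N (S h) (2 * b + 1) HN).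
     apply Rmult_le_compat_l. apply Rlt_le, Rdiv_lt_0_compat; lra. destruct e as [|[|]]; [rewrite Nat.add_0_r; lra|lra|lia]. }
   assert (Hfar : forall x, Rabs (x - c) >= 7/8 * clen N h -> 2 / clen N h >= F x).
   { intros x Hx. assert (0 < Rabs (x - c)) by lra. apply Rle_ge. eapply Rle_trans. apply HFc; auto.
     eapply Rle_trans. apply Rinv_le_contravar; [|apply Rge_le; exact Hx]. lra.
     rewrite Rinv_mult. unfold Rdiv. assert (0 < / clen N h) by (apply Rinv_0_lt_compat; lra).
     replace (/ (7/8)) with (8/7) by field. lra. }
   assert (Hwhb : wt N h b <= (/ pp N) ^ (S m) * wt N (h + S m) (b * 2 ^ S m + t)).
   { pose proof (desc_wt_lower N (S m) HN h b t Ht). pose proof (inv_pow_mul (pp N) (S m) ltac:(lra)).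
     pose proof (pow_le (/ pp N) (S m) ltac:(apply Rlt_le, Rinv_0_lt_compat; lra)).
     apply Rle_trans with ((/ pp N) ^ S m * (pp N ^ S m * wt N h b)). right. rewrite <- Rmult_assoc. rewrite H2. ring.
     apply Rmult_le_compat_l; auto. }
   assert (Hcs : / clen N (S h) = / eta N * / clen N h) by (rewrite clen_S, Rinv_mult; auto).
   replace (h + S m)%nat with (S h + m)%nat in * by lia.
   assert (HA : 0 < / clen N h) by (apply Rinv_0_lt_compat; lra).
   assert (HQ : 0 < / pp N <= 32/15). { split. apply Rinv_0_lt_compat; lra. assert (15/32 <= pp N) by (unfold pp; lra).
       replace (32/15) with (/ (15/32)) by field. apply Rinv_le_contravar; lra. }
   assert (HE : 16 <= / eta N). { replace 16 with (/ (/16)) by field. apply Rinv_le_contravar; lra. }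
   destruct (desc_index_cases m b t Ht) as [[H1 H2]|[t' [H1 [H2 H3]]]].
   + rewrite H2 in *. pose proof (IHm (S h) (2 * b)%nat t d' H1 ltac:(lia) Hc) as IH.
     assert (Hcj : Jin N (S h) (2 * b) c) by (apply (desc_nest N m HN (S h) (2 * b) t); auto).
     apply Jin_even in Hcj; auto.
     assert (S2 : sumR (2 ^ d') (fun t' => wt N (S h + d') ((2 * b + 1) * 2 ^ d' + t') * F (zc N (S h + d') ((2 * b + 1) * 2 ^ d' + t'))) <= 2 / clen N h * wt N h b).
     { apply Hsib. lia. intros x Hx. apply Hfar. apply Jin_odd in Hx; auto. rewrite Rabs_right; lra. }
     set (w := wt N (S h + m) (2 * b * 2 ^ m + t)) in *. pose proof (wt_pos N (S h + m) (2 * b * 2 ^ m + t) HN) as Hw. fold w in Hw.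
     rewrite Hcs in IH. set (P := (/ pp N) ^ m) in *. assert (0 < P) by (apply pow_lt; lra).
     change ((/ pp N) ^ S m) with (/ pp N * P) in *.
     assert (2 / clen N h * wt N h b <= 2 * / clen N h * (/ pp N * P * w)) by (unfold Rdiv; apply Rmult_le_compat_l; lra).
     assert (3 * / pp N <= / eta N) by lra.
     assert (3 * / pp N * (/ clen N h * P * w) <= / eta N * (/ clen N h * P * w)) by (apply Rmult_le_compat_r; [|lra]; apply Rmult_le_pos; [apply Rmult_le_pos|]; lra).
     nra.
   + rewrite H3 in *. pose proof (IHm (S h) (2 * b + 1)%nat t' d' H2 ltac:(lia) Hc) as IH.
     assert (Hcj : Jin N (S h) (2 * b + 1) c) by (apply (desc_nest N m HN (S h) (2 * b + 1) t'); auto).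
     apply Jin_odd in Hcj; auto.
     assert (S2 : sumR (2 ^ d') (fun t'0 => wt N (S h + d') ((2 * b + 0) * 2 ^ d' + t'0) * F (zc N (S h + d') ((2 * b + 0) * 2 ^ d' + t'0))) <= 2 / clen N h * wt N h b).
     { apply Hsib. lia. intros x Hx. apply Hfar. rewrite Nat.add_0_r in Hx. apply Jin_even in Hx; auto. rewrite Rabs_left1; lra. }
     rewrite Nat.add_0_r in S2.
     set (w := wt N (S h + m) ((2 * b + 1) * 2 ^ m + t')) in *. pose proof (wt_pos N (S h + m) ((2 * b + 1) * 2 ^ m + t') HN) as Hw. fold w in Hw.
     rewrite Hcs in IH. set (P := (/ pp N) ^ m) in *. assert (0 < P) by (apply pow_lt; lra).
     change ((/ pp N) ^ S m) with (/ pp N * P) in *.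
     assert (2 / clen N h * wt N h b <= 2 * / clen N h * (/ pp N * P * w)) by (unfold Rdiv; apply Rmult_le_compat_l; lra).
     assert (3 * / pp N <= / eta N) by lra.
     assert (3 * / pp N * (/ clen N h * P * w) <= / eta N * (/ clen N h * P * w)) by (apply Rmult_le_compat_r; [|lra]; apply Rmult_le_pos; [apply Rmult_le_pos|]; lra).
     nra.
Qed.

Lemma distI_facts x I : 0 <= distI x I /\ lo I - x <= distI x I /\ x - hi I <= distI x I.
Proof. unfold distI. pose proof (Rmax_l 0 (Rmax (lo I - x) (x - hi I))). pose proof (Rmax_r 0 (Rmax (lo I - x) (x - hi I))).
 pose proof (Rmax_l (lo I - x) (x - hi I)). pose proof (Rmax_r (lo I - x) (x - hi I)). lra. Qed.

Lemma Pker_facts I c : inI I c -> 0 < len I ->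
  (forall x, 0 <= Pker I x) /\ (forall x, Pker I x <= / len I) /\ (forall x, 0 < Rabs (x - c) -> Pker I x <= / Rabs (x - c)).
Proof. intros Hc HL. pose proof (inI_bounds I c Hc). assert (hi I - lo I <= len I) by (unfold len; apply Rmax_r).
 unfold Pker. split; [|split].
 - intros x. pose proof (distI_facts x I). apply Rmult_le_pos. lra. apply Rlt_le, Rinv_0_lt_compat. apply pow_lt. lra.
 - intros x. pose proof (distI_facts x I). unfold Rdiv.
   apply Rmult_le_reg_l with ((len I + distI x I) ^ 2). apply pow_lt; lra.
   rewrite <- Rmult_assoc, (Rmult_comm _ (len I)), Rmult_assoc, Rinv_r, Rmult_1_r by (apply pow_nonzero; lra).
   apply Rmult_le_reg_r with (len I). lra. rewrite Rmult_assoc, Rinv_l, Rmult_1_r by lra. simpl. nra.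
 - intros x Hx. pose proof (distI_facts x I).
   assert (Rabs (x - c) <= len I + distI x I).
   { unfold Rabs. destruct (Rcase_abs (x - c)); destruct (Rle_dec x (hi I)); destruct (Rle_dec (lo I) x); lra. }
   set (s := len I + distI x I) in *. assert (0 < s) by (unfold s; lra). assert (len I <= s) by (unfold s; lra).
   apply Rle_trans with (/ s).
   { apply Rle_trans with (s / s ^ 2). unfold Rdiv. apply Rmult_le_compat_r. apply Rlt_le, Rinv_0_lt_compat, pow_lt; lra. lra.
     right. field. lra. }
   apply Rinv_le_contravar; lra. Qed.

Lemma P_bound N I I0 k jA : (16 <= N)%nat -> inI I (zc N k jA) -> (jA < 2 ^ k)%nat -> 7/16 * clen N k <= len I ->
  0 <= Pomega N I I0 <= 4 * wt N k jA / clen N k.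
Proof. intros HN Hc Hj HL. pose proof (clen_pos N k HN). assert (HL0 : 0 < len I) by lra.
 destruct (Pker_facts I _ Hc HL0) as [P0 [P1 P2]]. pose proof (wt_pos N k jA HN).
 unfold Pomega, omega_int. split.
 - apply lim_ge0. intros K. apply sumR_nonneg. intros. apply decR_bounds. pose proof (wt_pos N K i HN). specialize (P0 (zc N K i)). nra.
 - apply (lim_le _ k). 2: apply Rmult_le_pos; [lra|]; apply Rlt_le, Rinv_0_lt_compat; lra.
   intros K HK. eapply Rle_trans.
   + apply (sumR_le _ _ (fun j => wt N (0 + K) (0 * 2 ^ K + j) * Pker I (zc N (0 + K) (0 * 2 ^ K + j)))).
     intros j Hjj. simpl. pose proof (wt_pos N K j HN). specialize (P0 (zc N K j)).
     destruct (classic (inI I0 (zc N K j))); [rewrite decR_t|rewrite decR_f]; auto; nra.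
   + eapply Rle_trans. apply (shell N (zc N k jA) (/ len I) (Pker I) HN P1 P0 P2 k 0 0 jA K); auto. simpl. apply zc_in; auto.
     change (0 + k)%nat with k. change (0 * 2 ^ k + jA)%nat with jA. replace (clen N 0) with 1 by reflexivity.
     assert (/ len I <= 16/7 * / clen N k). { apply Rle_trans with (/ (7/16 * clen N k)). apply Rinv_le_contravar; lra.
       rewrite Rinv_mult. replace (/ (7/16)) with (16/7) by field. lra. }
     assert (0 <= (/ pp N) ^ k) by (apply pow_le; pose proof (pq_bounds N HN); apply Rlt_le, Rinv_0_lt_compat; lra).
     assert (0 < / clen N k) by (apply Rinv_0_lt_compat; lra).
     unfold Rdiv. rewrite Rinv_1. nra. Qed.

Lemma omega_nonneg N I : (16 <= N)%nat -> 0 <= omega N I.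
Proof. intros HN. rewrite omega_mu. apply lim_ge0. intros; apply mu_nonneg; auto. Qed.

Lemma sigma_zero_noatom N I : (16 <= N)%nat -> ~ (exists k j, atomIn N I k j) -> Defs.sigma N I = 0.
Proof. intros HN Hn. destruct (sigma_cv N I HN) as [Hcv _].
 assert (forall n, Sn N I n = 0). { intros n. apply sumR_zero. intros g _. apply sumR_zero. intros j Hj.
   apply decR_f. intro H. apply Hn. exists g, j. split; auto. }
 apply Rle_antisym. apply (cv_le_const _ _ 0 _ Hcv). intros; rewrite H; lra.
 apply (cv_ge_const _ _ 0 _ Hcv). intros; rewrite H; lra. Qed.

Lemma term_bound N I I0 : (16 <= N)%nat -> term N I I0 <= 48 * omega N I.
Proof. intros HN. pose proof (omega_nonneg N I HN). unfold term.
 destruct (classic (Defs.sigma N I = 0)) as [Hs|Hs]. rewrite decR_t by auto. lra.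
 rewrite decR_f by auto. destruct (sigma_cv N I HN) as [_ [_ Hs0]].
 assert (Hsp : 0 < Defs.sigma N I) by lra.
 assert (Hat : exists k j, atomIn N I k j) by (apply NNPP; intro Hn; apply Hs, sigma_zero_noatom; auto).
 destruct (min_exists N I Hat) as [k [jA Hm]].
 pose proof (dbl_main N I k jA HN Hm) as Hd. pose proof (sigma_ge_sc N I k jA HN Hm) as Hsc.
 assert (HE : Defs.sigma N I * Esq N I <= Defs.sigma N I - sw N k jA).
 { unfold Esq. replace (Defs.sigma N I * (/ 2 * / Defs.sigma N I ^ 2 * sigma_dbl N I)) with (sigma_dbl N I / (2 * Defs.sigma N I)) by (field; lra).
   apply Rmult_le_reg_r with (2 * Defs.sigma N I). lra. unfold Rdiv. rewrite Rmult_assoc, Rinv_l, Rmult_1_r by lra. nra. }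
 set (P := Pomega N I I0).
 assert (H1 : Defs.sigma N I * Esq N I * P ^ 2 <= (Defs.sigma N I - sw N k jA) * P ^ 2) by (apply Rmult_le_compat_r; [apply pow2_ge_0|auto]).
 eapply Rle_trans. exact H1.
 destruct (classic (exists g i, (k < g)%nat /\ atomIn N I g i)) as [[g [i [Hg Hi]]]|Hno].
 - destruct (inner_child N I k jA g i HN Hm Hg Hi) as [Hd1 _].
   destruct Hm as [[HjA Hc] Hmin] eqn:Hm'. destruct Hi as [_ Hzi].
   pose proof (len_ge I _ _ Hzi Hc).
   destruct (P_bound N I I0 k jA HN Hc HjA ltac:(lra)) as [P0 P1]. fold P in P0, P1.
   pose proof (sigma_main N I k jA HN Hm) as Hmain. unfold Wc in Hmain.
   assert (P ^ 2 <= 16 * (wt N k jA / clen N k) ^ 2).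
   { replace (16 * (wt N k jA / clen N k) ^ 2) with ((4 * wt N k jA / clen N k) ^ 2) by (field; pose proof (clen_pos N k HN); lra).
     apply pow_incr. lra. }
   assert ((Defs.sigma N I - sw N k jA) * P ^ 2 <= (Defs.sigma N I - sw N k jA) * (16 * (wt N k jA / clen N k) ^ 2)) by (apply Rmult_le_compat_l; lra).
   lra.
 - rewrite (sigma_single N I k jA HN Hm). lra. intros g i Hg Hi. apply Hno; eauto. Qed.

Lemma disj_sum I0 (I : nat -> itv) x w : 0 <= w ->
  (forall x, inI I0 x <-> exists r, inI (I r) x) ->
  (forall r r' x, r <> r' -> inI (I r) x -> inI (I r') x -> False) ->
  forall n, sumR n (fun r => decR (inI (I r) x) w 0) <= decR (inI I0 x) w 0.
Proof. intros Hw Hcov Hdis n. induction n. simpl. apply decR_bounds; auto.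
 simpl. destruct (classic (inI (I n) x)) as [Hx|Hx].
 - rewrite sumR_zero. rewrite !decR_t; auto. lra. apply Hcov. eauto.
   intros r Hr. apply decR_f. intro H. apply (Hdis r n x); auto. lia.
 - rewrite (decR_f (inI (I n) x)) by auto. lra. Qed.

Theorem mainTheorem9 :
  forall N : nat, (16 <= N)%nat ->
  exists C : R,
  forall (I0 : itv) (I : nat -> itv),
    (forall x, inI I0 x -> 0 <= x <= 1) ->
    (forall x, inI I0 x <-> exists r, inI (I r) x) ->
    (forall r r' x, r <> r' -> inI (I r) x -> inI (I r') x -> False) ->
    forall n : nat, sumR n (fun r => term N (I r) I0) <= C * omega N I0.
Proof.
 intros N HN. exists 48. intros I0 I _ Hcov Hdis n.
 eapply Rle_trans. apply sumR_le. intros r _. apply (term_bound N (I r) I0 HN).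
 rewrite sumR_scal. apply Rmult_le_compat_l. lra.
 assert (Hl : forall r, exists l, Un_cv (mu N (I r)) l) by (intros; apply mu_cv; auto).
 destruct (mu_cv N I0 HN) as [l0 Hl0].
 assert (Hsum : Un_cv (fun K => sumR n (fun r => mu N (I r) K)) (sumR n (fun r => omega N (I r)))).
 { apply cv_sumR. intros r _. destruct (Hl r) as [l Hlr]. rewrite omega_mu, (lim_of_cv _ _ Hlr). auto. }
 rewrite omega_mu, (lim_of_cv _ _ Hl0).
 apply (cv_le _ _ _ _ 0 Hsum Hl0). intros K _. unfold mu.
 rewrite <- sumR_exchange. apply sumR_le. intros j _. apply disj_sum; auto.
 pose proof (wt_pos N K j HN). lra. Qed.
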